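(* If $G$ is a connected graph with girth at least $5$ and maximum degree $\Delta$, then $\chi_{D\ell}(G)\le\Delta+2$; that is, for every assignment of lists $L(v)$ of colors with $|L(v)|\ge\Delta+2$ for all $v\in V(G)$, there is a proper distinguishing coloring $\varphi$ of $G$ with $\varphi(v)\in L(v)$ for all $v$.
   Context: A coloring $\varphi$ of $G$ is proper if adjacent vertices get different colors, and distinguishing if the only automorphism $f$ of $G$ with $\varphi(f(v))=\varphi(v)$ for all $v$ is the identity. The distinguishing list chromatic number $\chi_{D\ell}(G)$ is the smallest $k$ such that for every list assignment $L$ with $|L(v)|\ge k$ for all $v$, there exists a proper distinguishing coloring $\varphi$ with $\varphi(v)\in L(v)$ for all $v$. *)

(* Defs.v *)
From mathcomp Require Import all_boot all_fingroup.
Set Implicit Arguments. Unset Strict Implicit. Unset Printing Implicit Defensive.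

Definition simple_graph (T : finType) (e : rel T) : Prop :=
  symmetric e /\ irreflexive e.

Definition connected_graph (T : finType) (e : rel T) : Prop :=
  forall x y : T, connect e x y.

Definition is_graph_cycle (T : finType) (e : rel T) (s : seq T) : bool :=
  [&& uniq s, 3 <= size s & path.cycle e s].

Definition girth_at_least (T : finType) (e : rel T) (k : nat) : Prop :=
  forall s : seq T, is_graph_cycle e s -> k <= size s.

Definition degree (T : finType) (e : rel T) (v : T) : nat := #|[set u | e v u]|.

Definition max_degree (T : finType) (e : rel T) : nat :=
  \max_(v : T) degree e v.

Definition proper_coloring (T : finType) (C : Type) (e : rel T) (phi : T -> C) : Prop :=
  forall x y : T, e x y -> phi x <> phi y.

Definition graph_automorphism (T : finType) (e : rel T) (f : {perm T}) : Prop :=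
  forall x y : T, e (f x) (f y) = e x y.

Definition distinguishing (T : finType) (C : Type) (e : rel T) (phi : T -> C) : Prop :=
  forall f : {perm T}, graph_automorphism e f ->
    (forall v : T, phi (f v) = phi v) -> f = 1%g.

(* Main.v *)
Require Import Defs.
From mathcomp Require Import all_boot all_fingroup.
Set Implicit Arguments. Unset Strict Implicit. Unset Printing Implicit Defensive.

Section Prop5.
Variable (T : finType) (e : rel T).
Hypothesis esym : symmetric e.
Hypothesis eirr : irreflexive e.
Hypothesis girth : girth_at_least e 5.

Lemma neq_of_e a b : e a b -> a != b.
Proof. by apply: contraTneq => ->; rewrite eirr. Qed.

Lemma no_tri a b c : e a b -> e b c -> e c a -> False.
Proof.
move=> ab bc ca.
have := @girth [:: a; b; c].
rewrite /is_graph_cycle /= ab bc ca !inE !andbT.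
move=> H; suff: 4 < 3 by []; apply: H.
by rewrite negb_or (neq_of_e ab) (neq_of_e bc) /= eq_sym (neq_of_e ca).
Qed.

Lemma no_sq a b c d : e a b -> e b c -> e c d -> e d a -> a != c -> b != d -> False.
Proof.
move=> ab bc cd da ac bd.
have := @girth [:: a; b; c; d].
rewrite /is_graph_cycle /= ab bc cd da !inE !andbT.
move=> H; suff: 5 < 4 by []; apply: H.
rewrite !negb_or (neq_of_e ab) (negbTE (neq_of_e bc)) (negbTE (neq_of_e cd)) /=.
by rewrite (negbTE ac) bd andbT eq_sym (neq_of_e da).
Qed.


Lemma find_rcons_has (a : pred T) s x : has a s -> find a (rcons s x) = find a s.
Proof. by move=> h; rewrite -cats1 find_cat h. Qed.

Lemma find_rcons_nhas (a : pred T) s x : ~~ has a s -> size s <= find a (rcons s x).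
Proof. by move=> h; rewrite -cats1 find_cat (negbTE h) leq_addr. Qed.

Definition fi (s : seq T) (x : T) := find (e x) s.

Definition OInv (r : T) (s : seq T) :=
  [/\ uniq s, nth r s 0 = r, 0 < size s &
   [/\ (forall i, 0 < i < size s -> fi s (nth r s i) < i),
    (forall i j, 0 < i -> i <= j -> j < size s -> fi s (nth r s i) <= fi s (nth r s j)) &
    (forall x, x \notin s -> forall i, 0 < i < size s -> fi s (nth r s i) <= fi s x)]].

Lemma grow (r : T) : connected_graph e ->
  forall n, 0 < n -> n <= #|T| -> exists s, size s = n /\ OInv r s.
Proof.
move=> conn; elim=> // n IH _ hn.
case: n IH hn => [_ _|n IH hn].
  exists [:: r]; split => //; split => //; split.
  - by move=> [|i] //=.
  - by move=> [|i] [|j].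
  - by move=> x _ [|i].
have [s [sz [us s0 s_pos [O1 O2 O3]]]] := IH isT (ltnW hn).
have [y yout yadj] : exists2 y, y \notin s & has (e y) s.
  case: (boolP [exists y, (y \notin s) && has (e y) s]).
    by move=> /existsP[y /andP[h1 h2]]; exists y.
  move=> /existsPn H.
  have cl : closed e (mem s).
    move=> a b ab; apply/idP/idP => [ain|bin]; apply/negPn/negP => nin.
    - by move: (H b); rewrite nin /=; case/negP; apply/hasP; exists a => //; rewrite esym.
    - by move: (H a); rewrite nin /=; case/negP; apply/hasP; exists b.
  have allin : forall z, z \in s.
    move=> z.
    have rin : r \in s by rewrite -{1}s0 mem_nth.
    by move: (closed_connect cl (conn r z)); rewrite -!topredE /= => <-.
  have : #|T| <= #|s| by apply: subset_leq_card; apply/subsetP => z _; exact: allin.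
  by move/card_uniqP: us => ->; rewrite sz leqNgt hn.
case: (@arg_minnP T y (fun z => z \notin s) (fi s) yout) => /= z zout zmin.
have zs : fi s z < size s.
  by apply: leq_ltn_trans (zmin _ yout) _; rewrite /fi -has_find.
have zhas : has (e z) s by rewrite has_find.
have fiS : forall w, has (e w) s -> fi (rcons s z) w = fi s w.
  by move=> w hw; rewrite /fi find_rcons_has.
have nthS : forall i, i < size s -> nth r (rcons s z) i = nth r s i.
  by move=> i hi; rewrite nth_rcons hi.
have hasS : forall i, 0 < i < size s -> has (e (nth r s i)) s.
  move=> i /andP[i0 hi]; rewrite has_find; apply: leq_trans (O1 _ _) _.
    by rewrite i0.
  exact: ltnW.
exists (rcons s z); split; first by rewrite size_rcons sz.
have nthZ : nth r (rcons s z) (size s) = z by rewrite nth_rcons ltnn eqxx.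
split.
- by rewrite rcons_uniq zout.
- by rewrite nthS // sz.
- by rewrite size_rcons.
split.
- move=> i /andP[i0]; rewrite size_rcons ltnS leq_eqVlt => /orP[/eqP ->|hi].
    by rewrite nthZ fiS.
  by rewrite nthS // fiS ?hasS ?i0 ?hi //; apply: O1; rewrite i0.
- move=> i j i0 ij; rewrite size_rcons ltnS => hj.
  have lhsI : forall k, 0 < k <= size s -> fi (rcons s z) (nth r (rcons s z) k) <= fi s z.
    move=> k /andP[k0 hk]; case: (ltngtP k (size s)) hk => // [hk _|-> _].
      by rewrite nthS // fiS ?hasS ?k0 ?hk //; apply: O3; rewrite ?k0.
    by rewrite nthZ fiS.
  move: ij; case: (ltngtP j (size s)) hj => // [hj' _|-> _] ij; last first.
    by rewrite nthZ [X in _ <= X]fiS //; apply: lhsI; rewrite i0 ij.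
  have hi : i < size s by apply: leq_ltn_trans hj'.
  rewrite !nthS // !fiS ?hasS ?i0 ?hi ?hj' ?(leq_trans i0 ij) //.
  exact: O2.
- move=> w; rewrite mem_rcons inE negb_or => /andP[wz ws] i.
  rewrite size_rcons ltnS => /andP[i0 hi].
  have lhs : fi (rcons s z) (nth r (rcons s z) i) <= fi s z.
    move: hi; rewrite leq_eqVlt => /orP[/eqP ->|hi].
      by rewrite nthZ fiS.
    by rewrite nthS // fiS ?hasS ?i0 ?hi //; apply: O3; rewrite ?i0.
  apply: leq_trans lhs _.
  case hw : (has (e w) s).
    by rewrite fiS // zmin.
  apply: leq_trans (find_rcons_nhas _ _) ; first exact: ltnW.
  by rewrite hw.
Qed.


Lemma order_exists (r : T) : connected_graph e ->
  exists s, OInv r s /\ forall x, x \in s.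
Proof.
move=> conn.
have pos : 0 < #|T| by apply/card_gt0P; exists r.
have [s [sz Os]] := grow r conn pos (leqnn _).
exists s; split => // x; apply/negPn/negP => xs.
case: Os => us _ _ _.
have : uniq (x :: s) by rewrite /= xs us.
move/card_uniqP => /= h.
by have := max_card (mem (x :: s)); rewrite h sz ltnn.
Qed.

Lemma size_filter_deg (pre : seq T) y : uniq pre -> size (filter (e y) pre) <= degree e y.
Proof.
move=> u; rewrite /degree cardE; apply: uniq_leq_size; first exact: filter_uniq.
by move=> z; rewrite mem_filter mem_enum inE => /andP[].
Qed.

Lemma size_filter_deg_lt (pre : seq T) y x : uniq pre -> x \notin pre -> e y x ->
  size (filter (e y) pre) < degree e y.
Proof.
move=> u xp yx; rewrite /degree cardE.
have -> : (size (filter (e y) pre)).+1 = size (x :: filter (e y) pre) by [].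
apply: uniq_leq_size; first by rewrite /= mem_filter (negbTE xp) andbF filter_uniq.
by move=> z; rewrite inE mem_filter mem_enum inE => /orP[/eqP ->|/andP[]].
Qed.

Lemma deg_le y : degree e y <= max_degree e.
Proof. by rewrite /max_degree; apply: (@leq_bigmax T (fun v => degree e v)). Qed.

Variable (C : eqType).

Definition forb (r : T) (phi : T -> C) (pre : seq T) (x : T) : seq C :=
  let fx := filter (e x) pre in
  if size fx <= 1 then phi r :: phi (head x fx) :: map phi (filter (e (head x fx)) pre)
  else phi r :: map phi fx.

Lemma forb_size r phi pre x : uniq pre -> x \notin pre -> has (e x) pre ->
  size (forb r phi pre x) <= max_degree e + 1.
Proof.
move=> u xp hx; rewrite /forb; case: ifP => h /=.
  case E: (filter (e x) pre) h => [|p t] /=.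
    by move: hx; rewrite has_filter E.
  move=> _; rewrite size_map addn1 ltnS.
  have : p \in filter (e x) pre by rewrite E inE eqxx.
  rewrite mem_filter => /andP[xpe pin].
  apply: leq_trans (deg_le p); apply: (size_filter_deg_lt (x:=x)) => //.
  by rewrite (esym p x).
by rewrite size_map addn1 ltnS; apply: leq_trans (deg_le x); apply: size_filter_deg.
Qed.

Lemma forb_eq r phi phi' pre x : has (e x) pre -> phi r = phi' r -> {in pre, phi =1 phi'} ->
  forb r phi pre x = forb r phi' pre x.
Proof.
move=> hx Hr Hp; rewrite /forb.
case: ifP => _; rewrite Hr; congr cons; last first.
  by apply/eq_in_map => z; rewrite mem_filter => /andP[_ /Hp].
have -> : phi (head x (filter (e x) pre)) = phi' (head x (filter (e x) pre)).
  case E: (filter (e x) pre) => [|p t] /=.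
    by move: hx; rewrite has_filter E.
  have : p \in filter (e x) pre by rewrite E inE eqxx.
  by rewrite mem_filter => /andP[_ /Hp].
by congr cons; apply/eq_in_map => z; rewrite mem_filter => /andP[_ /Hp].
Qed.

Lemma pick_color (l f : seq C) n : n + 2 <= size (undup l) -> size f <= n + 1 ->
  exists2 c, c \in l & c \notin f.
Proof.
move=> hl hf.
case: (boolP (has (fun c => c \notin f) l)) => [/hasP[c ??]|/hasPn H].
  by exists c.
have : size (undup l) <= size f.
  apply: uniq_leq_size; first exact: undup_uniq.
  by move=> c; rewrite mem_undup => /H; rewrite negbK.
move=> h; have := leq_trans hl (leq_trans h hf).
by rewrite addn2 addn1 ltnn.
Qed.


Lemma nth_in_take (r : T) (s : seq T) j k : uniq s -> j < size s -> (nth r s j \in take k s) = (j < k).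
Proof. by move=> u hj; rewrite in_take ?mem_nth // index_uniq. Qed.

Lemma has_pre r s i : OInv r s -> 0 < i < size s -> has (e (nth r s i)) (take i s).
Proof.
case=> u _ _ [O1 _ _] hi; have := O1 i hi; rewrite /fi => hf.
have hs : i < size s by case/andP: hi.
apply/hasP; exists (nth r s (find (e (nth r s i)) s)).
  by rewrite nth_in_take // (ltn_trans hf hs).
by apply: nth_find; rewrite has_find (ltn_trans hf hs).
Qed.

Variable (L : T -> seq C).
Hypothesis HL : forall v, max_degree e + 2 <= size (undup (L v)).

Definition CInv r s (phi : T -> C) k := forall i, i < k ->
  phi (nth r s i) \in L (nth r s i) /\
  (0 < i -> phi (nth r s i) \notin forb r phi (take i s) (nth r s i)).

Lemma color_exists r s : OInv r s -> forall k, k <= size s -> exists phi, CInv r s phi k.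
Proof.
move=> Os; have [u s0 _ _] := Os.
elim=> [_|k IH hk].
  have [c0 _ _] := @pick_color (L r) [::] _ (HL r) isT.
  by exists (fun _ => c0).
have [phi Hphi] := IH (ltnW hk).
set x := nth r s k.
have xnot : x \notin take k s by rewrite nth_in_take // ltnn.
have [c cL cf] : exists2 c, c \in L x & (0 < k -> c \notin forb r phi (take k s) x).
  case: k hk IH Hphi @x xnot => [|k] hk IH Hphi x xnot.
    by have [c ??] := @pick_color (L x) [::] _ (HL x) isT; exists c.
  have [c ??] := @pick_color (L x) (forb r phi (take k.+1 s) x) _ (HL x)
    (forb_size _ _ (take_uniq _ u) xnot (has_pre Os (i:=k.+1) hk)).
  by exists c.
exists (fun y => if y == x then c else phi y) => i; rewrite ltnS leq_eqVlt => /orP[/eqP ->|hi].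
  rewrite eqxx; split => // k0; rewrite -(@forb_eq r phi); first exact: cf.
  - by apply: (has_pre Os); rewrite k0 hk.
  - by rewrite -s0 /x nth_uniq ?(leq_ltn_trans _ hk) // eq_sym (gtn_eqF k0).
  - by move=> z zi /=; rewrite (negbTE (contraNneq _ xnot)) // => <-.
have ix : (nth r s i == x) = false.
  by rewrite /x nth_uniq ?(ltn_trans hi hk) // ?(ltn_trans hi) // ltn_eqF.
rewrite ix; have [H1 H2] := Hphi i hi; split => // i0.
rewrite -(@forb_eq r phi); first exact: H2.
- by apply: (has_pre Os); rewrite i0 (ltn_trans hi).
- have k0 : 0 < k by apply: leq_trans i0 (ltnW hi).
  rewrite -s0 /x nth_uniq //; first by rewrite eq_sym (gtn_eqF k0).
  by apply: ltn_trans hk.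
- move=> z zi /=; case: eqP => // zx; move: xnot; rewrite -zx.
  have zs := mem_take zi.
  move: zi; rewrite !in_take // => h1.
  by rewrite (ltn_trans h1 hi).
Qed.


Lemma forb_head r phi pre x : phi r \in forb r phi pre x.
Proof. by rewrite /forb; case: ifP => _; rewrite inE eqxx. Qed.

Lemma forb_nbr r phi pre x y : x \in pre -> e y x -> phi x \in forb r phi pre y.
Proof.
move=> xp yx; rewrite /forb; case: ifP => h.
  have : x \in filter (e y) pre by rewrite mem_filter yx xp.
  case E: (filter (e y) pre) h => [|p [|??]] //= _.
  by rewrite mem_seq1 => /eqP ->; rewrite !inE eqxx orbT.
by rewrite inE; apply/orP; right; apply/mapP; exists x; rewrite // mem_filter yx xp.
Qed.

Lemma filter_single (a : pred T) (l : seq T) p : uniq l -> p \in l -> a p ->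
  (forall y, y \in l -> a y -> y = p) -> filter a l = [:: p].
Proof.
elim: l => [//|z l IH] /= /andP[zl ul]; rewrite inE => /orP[/eqP ->|pl] ap H.
  rewrite ap; congr cons.
  case E: (filter a l) => [//|y t].
  have : y \in filter a l by rewrite E inE eqxx.
  rewrite mem_filter => /andP[ay yl].
  by move: zl; rewrite -(H y) ?yl ?inE ?yl ?orbT.
have -> : a z = false.
  by apply/negP => az; move: zl; rewrite (H z) ?inE ?eqxx // pl.
apply: IH => // y yl ay; apply: H => //; by rewrite inE yl orbT.
Qed.

Lemma take_sub (s : seq T) k m y : k <= m -> y \in take k s -> y \in take m s.
Proof.
move=> km yk; have ys := mem_take yk.
by rewrite in_take // ; rewrite in_take // in yk; apply: leq_trans yk km.
Qed.

Lemma distinguishing_core r s (phi : T -> C) (f : {perm T}) :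
  OInv r s -> (forall x, x \in s) -> CInv r s phi (size s) ->
  graph_automorphism e f -> (forall v, phi (f v) = phi v) -> f = 1%g.
Proof.
move=> Os allin Hphi aut fphi.
have [u s0 _ [O1 O2 _]] := Os.
have idx : forall v, nth r s (index v s) = v by move=> v; rewrite nth_index.
have idxs : forall v, index v s < size s by move=> v; rewrite index_mem.
have phir : forall v, v != r -> phi v != phi r.
  move=> v vr; have [_ H] := Hphi _ (idxs v).
  have i0 : 0 < index v s.
    by rewrite lt0n; apply: contra vr => /eqP h; rewrite -(idx v) h s0.
  move: (H i0); rewrite idx; apply: contra => /eqP ->; exact: forb_head.
have fr : f r = r.
  by apply/eqP; apply/negPn/negP => /phir; rewrite fphi eqxx.
suff fix_all : forall k, k < size s -> f (nth r s k) = nth r s k.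
  by apply/permP => v; rewrite perm1 -{1 2}(idx v) fix_all.
elim/ltn_ind => k IH hk.
case: k IH hk => [|k] IH hk; first by rewrite s0.
set x := nth r s k.+1.
set pre := take k.+1 s.
have fixpre : forall y, y \in pre -> f y = y.
  by move=> y; rewrite /pre in_take ?allin // => hy; rewrite -(idx y) IH.
have adjpre : forall y, y \in pre -> e (f x) y = e x y.
  by move=> y /fixpre hy; rewrite -{1}hy aut.
apply/eqP; apply/negPn/negP => wx.
set w := f x in wx adjpre.
have wpre : w \notin pre.
  apply/negP => /fixpre h.
  have : f w = f x by rewrite h.
  by move/perm_inj => h'; move: wx; rewrite h' eqxx.
set m := index w s.
have wm : nth r s m = w by apply: idx.
have km : k.+1 < m.
  move: wpre; rewrite in_take ?allin // -leqNgt leq_eqVlt => /orP[/eqP h|//].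
  by move: wx; rewrite -wm /m -h eqxx.
have hm : m < size s by apply: idxs.
have phiw : phi w = phi x by apply: fphi.
have hx : has (e x) pre by apply: has_pre; rewrite // hk.
have upre : uniq pre by apply: take_uniq.
case: (leqP (size (filter (e x) pre)) 1) => hsz; last first.
  case E: (filter (e x) pre) hsz => [|a [|b t]] // _.
  have : uniq (filter (e x) pre) by apply: filter_uniq.
  rewrite E /= inE negb_or => /andP[/andP[ab _] _].
  have : a \in filter (e x) pre by rewrite E inE eqxx.
  have : b \in filter (e x) pre by rewrite E !inE eqxx orbT.
  rewrite !mem_filter => /andP[xb bp] /andP[xa ap].
  apply: (no_sq (a:=x) (b:=a) (c:=w) (d:=b)) => //.
  - by rewrite esym adjpre.
  - by rewrite adjpre.
  - by rewrite esym.
  - by rewrite eq_sym.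
case E: (filter (e x) pre) hsz => [|p [|??]] // _.
  by move: hx; rewrite has_filter E.
have pin : p \in filter (e x) pre by rewrite E inE eqxx.
move: (pin); rewrite mem_filter => /andP[xp pp].
have xadj : forall y, y \in pre -> e x y -> y = p.
  move=> y yp xy; have : y \in filter (e x) pre by rewrite mem_filter xy yp.
  by rewrite E inE => /eqP.
have ppre_m : p \in take m s by apply: take_sub pp; apply: ltnW.
have wp : e w p by rewrite adjpre.
have pw : e p w by rewrite esym.
have xin_m : x \in take m s by rewrite nth_in_take.
set P := fi s x.
have hP : P < k.+1 by apply: O1; rewrite hk.
have Ps : P < size s by apply: ltn_trans hP hk.
have nP : nth r s P = p.
  apply: xadj; first by rewrite nth_in_take.
  by apply: nth_find; rewrite has_find.
have QP : fi s w = P.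
  have QleP : fi s w <= P.
    rewrite leqNgt; apply/negP => hlt.
    by have := before_find r hlt; rewrite nP wp.
  have Qs : fi s w < size s by apply: leq_ltn_trans QleP Ps.
  have nQ : nth r s (fi s w) = p.
    have Qpre : nth r s (fi s w) \in pre by rewrite nth_in_take // (leq_ltn_trans QleP hP).
    apply: xadj => //; rewrite -adjpre //.
    by apply: nth_find; rewrite has_find.
  by apply/eqP; rewrite -(nth_uniq r Qs Ps u) nQ nP.
have wsingle : filter (e w) (take m s) = [:: p].
  apply: filter_single => //; first exact: take_uniq.
  move=> y ym wy.
  have ys := allin y.
  have ty : index y s < m by rewrite -in_take.
  case: (ltngtP (index y s) k.+1) => hty.
  - apply: xadj; first by rewrite /pre in_take.
    by rewrite -adjpre // /pre in_take.
  - have Py : P <= fi s y.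
      by rewrite /P -[x]/(nth r s k.+1) -(idx y); apply: O2 => //; apply: ltnW.
    have yP : fi s y <= P.
      by rewrite -QP -(idx y) -wm; apply: O2 => //; [apply: leq_ltn_trans hty | apply: ltnW].
    have Peq : fi s y = P by apply/eqP; rewrite eqn_leq yP Py.
    have yp : e y p.
      by rewrite -nP -Peq; apply: nth_find; rewrite has_find; move: Ps; rewrite -Peq.
    by case: (no_tri yp pw wy).
  - have yx : y = x by rewrite -(idx y) hty.
    by case: (no_tri xp pw); rewrite -yx.
have := (Hphi m hm).2 (leq_ltn_trans (leq0n _) km).
rewrite wm /forb wsingle /= phiw; case/negP.
by rewrite !inE; apply/orP; right; apply/orP; right; apply/mapP; exists x;
  rewrite // mem_filter xin_m esym xp.
Qed.

End Prop5.


Theorem proposition5 (T : finType) (e : rel T) (C : eqType) (L : T -> seq C) :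
  simple_graph e -> connected_graph e -> girth_at_least e 5 ->
  (forall v : T, max_degree e + 2 <= size (undup (L v))) ->
  exists phi : T -> C,
    [/\ proper_coloring e phi, distinguishing e phi & forall v : T, phi v \in L v].
Proof.
move=> [esym eirr] conn girth HL.
case: (pickP (fun _ : T => true)) => [r _|none]; last first.
  exists (fun v => match notF (Logic.eq_sym (none v)) with end); split.
  - by move=> x; have := none x.
  - by move=> f _ _; apply/permP => x; have := none x.
  - by move=> x; have := none x.
have [s [Os allin]] := order_exists esym r conn.
have [phi Hphi] := color_exists esym HL Os (leqnn _).
have [u s0 _ _] := Os.
have idx : forall v, nth r s (index v s) = v by move=> v; rewrite nth_index.
have idxs : forall v, index v s < size s by move=> v; rewrite index_mem.
exists phi; split.
- have H : forall x y, e x y -> index x s < index y s -> phi x <> phi y.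
    move=> x y xy hxy.
    have [_ H] := Hphi _ (idxs y).
    have := H (leq_ltn_trans (leq0n _) hxy); rewrite idx => hn ey.
    move: hn; rewrite -ey; case/negP; apply: forb_nbr; last by rewrite esym.
    by rewrite in_take.
  move=> x y xy; case: (ltngtP (index x s) (index y s)) => h.
  + exact: H.
  + by move=> exy; apply: (H y x) => //; rewrite esym.
  + by move: xy; rewrite -(idx x) h idx eirr.
- move=> f aut fphi; exact: (distinguishing_core esym eirr girth Os allin Hphi aut fphi).
- by move=> v; have [H _] := Hphi _ (idxs v); rewrite idx in H.
Qed.
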